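(* Let $S\subseteq\Sigma^n$ be a prime double-code and $i,i'\in[n]$. Then either $\backslash_i S=\backslash_{i'}S$ or $\backslash_i S\cap\backslash_{i'}S=\emptyset$.
   Context: Let $\Sigma=\{0,1,2,3\}$, $[n]=\{1,\ldots,n\}$. An $i$-line of $\Sigma^n$ is a set of the four words that agree in all coordinates except the $i$th; a line is an $i$-line for some $i$. A double-code is a set meeting every line in $0$ or $2$ elements; a double-MDS-code is a set meeting every line in exactly $2$ elements; a double-code is complementable if contained in a double-MDS-code, and prime if complementable, nonempty and not partitionable into two or more nonempty double-codes. For $S\subseteq\Sigma^n$ and $i\in[n]$, $\mathcal E_i(S)$ is the union of all $i$-lines that meet $S$, and $\backslash_i S=\mathcal E_i(S)\setminus S$. *)

(* Defs.v *)
From mathcomp Require Import all_boot.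
Set Implicit Arguments. Unset Strict Implicit. Unset Printing Implicit Defensive.

(* Sigma = {0,1,2,3} is 'I_4; words of Sigma^n are finite functions 'I_n -> 'I_4;
   coordinate i in [n] is represented by i : 'I_n (0-based). *)
Definition word (n : nat) := {ffun 'I_n -> 'I_4}.

Definition iline n (i : 'I_n) (x : word n) : {set word n} :=
  [set y : word n | [forall j : 'I_n, (j != i) ==> (y j == x j)]].

Definition is_iline n (i : 'I_n) (L : {set word n}) : Prop :=
  exists x : word n, L = iline i x.

Definition is_line n (L : {set word n}) : Prop := exists i : 'I_n, is_iline i L.

Definition double_code n (S : {set word n}) : Prop :=
  forall L : {set word n}, is_line L -> #|S :&: L| = 0 \/ #|S :&: L| = 2.

Definition double_MDS_code n (S : {set word n}) : Prop :=
  forall L : {set word n}, is_line L -> #|S :&: L| = 2.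

Definition complementable n (S : {set word n}) : Prop :=
  double_code S /\ exists M : {set word n}, double_MDS_code M /\ S \subset M.

Definition prime_double_code n (S : {set word n}) : Prop :=
  complementable S /\ S != set0 /\
  ~ (exists P : {set {set word n}},
        [/\ partition P S, 2 <= #|P| & forall B, B \in P -> double_code B]).

Definition Ecal n (i : 'I_n) (S : {set word n}) : {set word n} :=
  \bigcup_(x in S) iline i x.

Definition bslash n (i : 'I_n) (S : {set word n}) : {set word n} :=
  Ecal i S :\: S.

(* Main.v *)
Require Import Defs.
From mathcomp Require Import all_boot.
From mathcomp Require Import zify.
Set Implicit Arguments. Unset Strict Implicit. Unset Printing Implicit Defensive.

Definition good (a m : 'I_4 -> 'I_4 -> bool) :=
  [/\ (forall r, #|[set c | a r c]| != 0 -> #|[set c | a r c]| = 2),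
      (forall c, #|[set r | a r c]| != 0 -> #|[set r | a r c]| = 2),
      (forall r, #|[set c | m r c]| = 2),
      (forall c, #|[set r | m r c]| = 2) &
      (forall r c, a r c -> m r c)].

Lemma good_tr a m : good a m -> good (fun r c => a c r) (fun r c => m c r).
Proof. by case=> h1 h2 h3 h4 h5; split=> // r c; apply: h5. Qed.

Lemma ex_card (T : finType) (P : pred T) : [exists x, P x] -> #|[set x | P x]| != 0.
Proof. by case/existsP=> x Px; rewrite -lt0n; apply/card_gt0P; exists x; rewrite inE. Qed.

Section S.
Variables (a m : 'I_4 -> 'I_4 -> bool).
Hypothesis g : good a m.

Lemma colM_eq c : [exists r, a r c] -> [set r | m r c] = [set r | a r c].
Proof.
case: g => h1 h2 h3 h4 h5 ex; apply/eqP; rewrite eq_sym eqEcard h4 (h2 _ (ex_card ex)) leqnn andbT.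
by apply/subsetP=> r; rewrite !inE; apply: h5.
Qed.

Lemma rowM_out r c : ~~ [exists c', a r c'] -> m r c -> ~~ [exists r', a r' c].
Proof.
move=> nr mrc; apply/negP=> ex; move: (colM_eq ex) => /setP/(_ r).
rewrite !inE mrc => arc; case/negP: nr; apply/existsP; exists c; by rewrite -arc.
Qed.

Lemma card_out r : ~~ [exists c', a r c'] -> #|[set c | [exists r', a r' c]]| <= 2.
Proof.
move=> nr.
have sub : [set c | m r c] \subset ~: [set c | [exists r', a r' c]].
  by apply/subsetP=> c; rewrite !inE => /(rowM_out nr).
move: (subset_leq_card sub) (cardsC [set c | [exists r', a r' c]]).
case: g => _ _ -> _ _; rewrite card_ord; lia.
Qed.

Lemma bigC r0 c0 : [exists c, a r0 c] -> [exists r, a r c0] -> ~~ a r0 c0 ->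
  3 <= #|[set c | [exists r', a r' c]]|.
Proof.
move=> e1 e2 na.
have pr : [set c | a r0 c] \proper [set c | [exists r', a r' c]].
  apply/properP; split.
    by apply/subsetP=> c; rewrite !inE => arc; apply/existsP; exists r0.
  by exists c0; rewrite !inE.
move: (proper_card pr); case: g => h1 _ _ _ _; by rewrite h1 // ex_card.
Qed.
End S.

Lemma P1 a m : good a m -> forall r0 c0, [exists c, a r0 c] -> [exists r, a r c0] ->
  ~~ a r0 c0 -> forall r, [exists c, a r c].
Proof.
move=> g r0 c0 e1 e2 na r; case: (boolP [exists c, a r c]) => // nr.
by move: (card_out g nr) (bigC g e1 e2 na); lia.
Qed.

Lemma P1c a m : good a m -> forall r0 c0, [exists c, a r0 c] -> [exists r, a r c0] ->
  ~~ a r0 c0 -> forall c, [exists r, a r c].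
Proof. move=> g r0 c0 e1 e2 na; exact: (P1 (good_tr g) e2 e1 na). Qed.

Lemma rowC a m : good a m ->
  (forall r c, [exists c', a r c'] -> [exists r', a r' c] -> a r c) ->
  forall r0 c0, a r0 c0 -> [set c | a r0 c] = [set c | [exists r', a r' c]].
Proof.
move=> g noT r0 c0 a0; apply/setP=> c; rewrite !inE; apply/idP/idP.
  by move=> h; apply/existsP; exists r0.
by move=> h; apply: noT => //; apply/existsP; exists c0.
Qed.

Lemma layer a m b mb : good a m -> good b mb ->
  (forall r, [exists c, b r c]) -> (forall c, [exists r, b r c]) ->
  (forall r c, m r c -> ~~ a r c -> ~~ b r c) ->
  (forall r c, [exists c', a r c'] -> [exists r', a r' c] -> a r c) ->
  forall r0 c0, a r0 c0 -> b r0 c0 -> False.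
Proof.
move=> g gb br bc cross noT r0 c0 a0 b0.
have eC := rowC g noT a0.
have eR : [set r | a r c0] = [set r | [exists c', a r c']].
  apply: (rowC (good_tr g)) a0 => r c h1 h2; exact: noT.
have cC : #|[set c | [exists r', a r' c]]| = 2.
  case: g => h1 _ _ _ _; rewrite -eC h1 // ex_card //; by apply/existsP; exists c0.
have cR : #|[set r | [exists c', a r c']]| = 2.
  case: g => _ h2 _ _ _; rewrite -eR h2 // ex_card //; by apply/existsP; exists r0.
have rowB : forall r, ~~ [exists c', a r c'] -> b r c0.
  move=> r nr.
  have sub : [set c | m r c] \subset ~: [set c | [exists r', a r' c]].
    by apply/subsetP=> c; rewrite !inE => /(rowM_out g nr).
  have eM : [set c | m r c] = ~: [set c | [exists r', a r' c]].
    apply/eqP; rewrite eqEcard sub /=.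
    move: (cardsC [set c | [exists r', a r' c]]); case: g => _ _ h3 _ _; rewrite h3.
    rewrite card_ord cC => H; by rewrite -(leq_add2l 2) H.
  have subB : [set c | b r c] \subset [set c | [exists r', a r' c]].
    apply/subsetP=> c; rewrite !inE => brc; case: (boolP [exists r', a r' c]) => // nc.
    have : c \in [set c | m r c] by rewrite eM !inE.
    rewrite inE => mrc; have := cross r c mrc; rewrite brc; apply.
    by apply/negP=> arc; case/negP: nr; apply/existsP; exists c.
  have eB : [set c | b r c] = [set c | [exists r', a r' c]].
    apply/eqP; rewrite eqEcard subB cC /=.
    case: gb => h1 _ _ _ _; rewrite h1 //; exact: ex_card.
  have : c0 \in [set c | [exists r', a r' c]] by rewrite inE; apply/existsP; exists r0.
  by rewrite -eB inE.
have subC : ~: [set r | [exists c', a r c']] \subset [set r | b r c0].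
  by apply/subsetP=> r; rewrite !inE => /rowB.
have eCB : ~: [set r | [exists c', a r c']] = [set r | b r c0].
  apply/eqP; rewrite eqEcard subC /=.
  move: (cardsC [set r | [exists c', a r c']]); rewrite card_ord cR.
  case: gb => _ h2 _ _ _; rewrite h2 //; [move=> H; by rewrite -(leq_add2l 2) H | exact: ex_card].
have : r0 \in [set r | b r c0] by rewrite inE.
rewrite -eCB !inE; case/negP; by apply/existsP; exists c0.
Qed.

Section W.
Variables (n : nat) (i i' : 'I_n).
Hypothesis ne : i != i'.

Definition upd (x : word n) (r c : 'I_4) : word n :=
  [ffun j => if j == i then r else if j == i' then c else x j].

Lemma upd_i x r c : upd x r c i = r.
Proof. by rewrite ffunE eqxx. Qed.
Lemma upd_i' x r c : upd x r c i' = c.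
Proof. by rewrite ffunE eq_sym (negbTE ne) eqxx. Qed.
Lemma upd_o x r c j : j != i -> j != i' -> upd x r c j = x j.
Proof. by move=> h1 h2; rewrite ffunE (negbTE h1) (negbTE h2). Qed.
Lemma upd_upd x r c r' c' : upd (upd x r c) r' c' = upd x r' c'.
Proof.
apply/ffunP=> j; rewrite !ffunE; case: (j == i) => //; case: (j == i') => //.
Qed.
Lemma upd_id x : upd x (x i) (x i') = x.
Proof.
apply/ffunP=> j; rewrite !ffunE; case: eqP => [->//|_]; case: eqP => [->//|_] //.
Qed.
Lemma upd_inj x r c r' c' : upd x r c = upd x r' c' -> r = r' /\ c = c'.
Proof.
by move=> e; split; [move: (congr1 (fun f : word n => f i) e); rewrite !upd_i
  | move: (congr1 (fun f : word n => f i') e); rewrite !upd_i'].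
Qed.

Lemma ilineP (k : 'I_n) (y z : word n) : reflect (forall j, j != k -> y j = z j) (y \in iline k z).
Proof.
rewrite inE; apply: (iffP forallP) => h j.
  by move=> nj; move: (h j); rewrite nj => /eqP.
by apply/implyP=> nj; apply/eqP; apply: h.
Qed.

Lemma iline_sym (k : 'I_n) (y z : word n) : (y \in iline k z) = (z \in iline k y).
Proof.
by apply/ilineP/ilineP=> h j nj; rewrite h.
Qed.

Lemma iline_trans (k : 'I_n) (y z u : word n) : y \in iline k u -> z \in iline k u -> y \in iline k z.
Proof. by move=> /ilineP h1 /ilineP h2; apply/ilineP=> j nj; rewrite h1 // h2. Qed.

Lemma iline_i (y z : word n) : y \in iline i z -> y = upd z (y i) (z i').
Proof.
move/ilineP=> h; apply/ffunP=> j; rewrite ffunE; case: eqP => [->//|/eqP nj].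
by case: eqP => [->|/eqP nj']; rewrite h // eq_sym.
Qed.

Lemma iline_i' (y z : word n) : y \in iline i' z -> y = upd z (z i) (y i').
Proof.
move/ilineP=> h; apply/ffunP=> j; rewrite ffunE; case: eqP => [->|/eqP nj].
  by rewrite h // eq_sym.
by case: eqP => [->//|/eqP nj']; rewrite h.
Qed.

Lemma upd_in_i x r r' c : upd x r c \in iline i (upd x r' c).
Proof.
apply/ilineP=> j nj; rewrite !ffunE (negbTE nj) //.
Qed.

Lemma upd_in_i' x r c c' : upd x r c \in iline i' (upd x r c').
Proof.
apply/ilineP=> j nj; rewrite !ffunE (negbTE nj); case: (j == i) => //.
Qed.

Lemma card_col (A : {set word n}) x c :
  #|A :&: iline i (upd x ord0 c)| = #|[set r | upd x r c \in A]|.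
Proof.
have inj : injective (fun r => upd x r c) by move=> r r' /upd_inj [].
rewrite -(card_imset (mem [set r | upd x r c \in A]) inj); apply: eq_card => y; rewrite inE.
apply/andP/imsetP.
  move=> [yA yl]; have e := iline_i yl; rewrite upd_upd upd_i' in e.
  by exists (y i); rewrite // inE -e.
by case=> r; rewrite inE => h ->; split => //; apply: upd_in_i.
Qed.

Lemma card_row (A : {set word n}) x r :
  #|A :&: iline i' (upd x r ord0)| = #|[set c | upd x r c \in A]|.
Proof.
have inj : injective (fun c => upd x r c) by move=> c c' /upd_inj [].
rewrite -(card_imset (mem [set c | upd x r c \in A]) inj); apply: eq_card => y; rewrite inE.
apply/andP/imsetP.
  move=> [yA yl]; have e := iline_i' yl; rewrite upd_upd upd_i in e.
  by exists (y i'); rewrite // inE -e.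
by case=> c; rewrite inE => h ->; split => //; apply: upd_in_i'.
Qed.

Lemma memE_i (S : {set word n}) x r c :
  (upd x r c \in Ecal i S) = [exists r', upd x r' c \in S].
Proof.
apply/bigcupP/existsP.
  case=> z zS yl; exists (z i).
  rewrite iline_sym in yl; have e := iline_i yl; rewrite upd_upd upd_i' in e.
  by rewrite -e.
by case=> r' h; exists (upd x r' c) => //; apply: upd_in_i.
Qed.

Lemma memE_i' (S : {set word n}) x r c :
  (upd x r c \in Ecal i' S) = [exists c', upd x r c' \in S].
Proof.
apply/bigcupP/existsP.
  case=> z zS yl; exists (z i').
  rewrite iline_sym in yl; have e := iline_i' yl; rewrite upd_upd upd_i in e.
  by rewrite -e.
by case=> c' h; exists (upd x r c') => //; apply: upd_in_i'.
Qed.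


Variables (S M : {set word n}).
Hypotheses (hS : double_code S) (hM : double_MDS_code M) (hSM : S \subset M).

Lemma isl (k : 'I_n) (z : word n) : is_line (iline k z).
Proof. by exists k, z. Qed.

Lemma good_at x : good (fun r c => upd x r c \in S) (fun r c => upd x r c \in M).
Proof.
split.
- move=> r; rewrite -card_row; by case: (hS (isl i' (upd x r ord0))) => ->.
- move=> c; rewrite -card_col; by case: (hS (isl i (upd x ord0 c))) => ->.
- move=> r; rewrite -card_row; exact: hM (isl _ _).
- move=> c; rewrite -card_col; exact: hM (isl _ _).
- by move=> r c; apply: (subsetP hSM).
Qed.

Definition hasT x := [exists r, exists c,
  (upd x r c \in bslash i S) && (upd x r c \in bslash i' S)].

Lemma hasT_eq x : hasT x = [exists r, exists c, [&& upd x r c \notin S,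
  [exists r', upd x r' c \in S] & [exists c', upd x r c' \in S]]].
Proof.
apply: eq_existsb => r; apply: eq_existsb => c.
rewrite /bslash !inE memE_i memE_i'; by case: (_ \in S).
Qed.

Lemma hasT_upd x r c : hasT (upd x r c) = hasT x.
Proof.
rewrite /hasT; apply: eq_existsb => r'; apply: eq_existsb => c'; by rewrite upd_upd.
Qed.

Lemma full x : hasT x ->
  (forall r, [exists c, upd x r c \in S]) /\ (forall c, [exists r, upd x r c \in S]).
Proof.
rewrite hasT_eq => /existsP [r /existsP [c /and3P [h1 h2 h3]]].
split; [exact: (P1 (good_at x) h3 h2 h1) | exact: (P1c (good_at x) h3 h2 h1)].
Qed.

Lemma cross_lemma (z w : word n) (j : 'I_n) : j != i -> j != i' ->
  w \in iline j z -> z \in S -> w \in S -> hasT z -> ~~ hasT w -> False.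
Proof.
move=> nj nj' wl zS wS hz hw.
have [br bc] := full hz.
have cross : forall r c, upd w r c \in M -> ~~ (upd w r c \in S) -> ~~ (upd z r c \in S).
  move=> r c mrc narc; apply/negP => bzrc.
  have zl : upd z r c \in iline j (upd w r c).
    apply/ilineP => k nk; rewrite !ffunE; case: (k == i) => //; case: (k == i') => //.
    by move/ilineP: wl => h; rewrite (h k nk).
  have wl' : upd w r c \in iline j (upd w r c) by apply/ilineP.
  have hSL : #|S :&: iline j (upd w r c)| = 2.
    case: (hS (isl j (upd w r c))) => // /eqP; rewrite cards_eq0 => /eqP e.
    have : upd z r c \in S :&: iline j (upd w r c) by rewrite inE bzrc zl.
    by rewrite e inE.
  have eSM : S :&: iline j (upd w r c) = M :&: iline j (upd w r c).
    apply/eqP; rewrite eqEcard setSI //= hSL hM //; exact: isl.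
  have : upd w r c \in M :&: iline j (upd w r c) by rewrite inE mrc.
  by rewrite -eSM inE (negbTE narc).
have noT : forall r c, [exists c', upd w r c' \in S] -> [exists r', upd w r' c \in S] ->
    upd w r c \in S.
  rewrite hasT_eq in hw; move=> r c e1 e2.
  case: (boolP (upd w r c \in S)) => // h; case/negP: hw.
  by apply/existsP; exists r; apply/existsP; exists c; rewrite h e1 e2.
have a0 : upd w (w i) (w i') \in S by rewrite upd_id.
have ei : w i = z i by move/ilineP: wl => h; apply: h; rewrite eq_sym.
have ei' : w i' = z i' by move/ilineP: wl => h; apply: h; rewrite eq_sym.
have b0 : upd z (w i) (w i') \in S by rewrite ei ei' upd_id.
exact: (layer (good_at w) (good_at z) br bc cross noT a0 b0).
Qed.

Lemma const (j : 'I_n) (u z w : word n) : z \in S :&: iline j u -> w \in S :&: iline j u ->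
  hasT z = hasT w.
Proof.
move=> /setIP [zS zl] /setIP [wS wl].
have wz := iline_trans wl zl.
case: (eqVneq j i) => [ej|nj].
  subst j; by rewrite (iline_i wz) hasT_upd.
case: (eqVneq j i') => [ej|nj'].
  subst j; by rewrite (iline_i' wz) hasT_upd.
have zw : z \in iline j w by rewrite iline_sym.
case hz: (hasT z); case hw: (hasT w) => //; exfalso.
  by apply: (cross_lemma nj nj' wz zS wS); rewrite ?hz ?hw.
by apply: (cross_lemma nj nj' zw wS zS); rewrite ?hz ?hw.
Qed.

Lemma memSP (P : pred (word n)) w : (w \in [set x in S | P x]) = (w \in S) && P w.
Proof. by rewrite inE. Qed.

Lemma dc_sub (P : pred (word n)) :
  (forall j u z w, z \in S :&: iline j u -> w \in S :&: iline j u -> P z = P w) ->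
  double_code [set x in S | P x].
Proof.
move=> h L [j [u ->]].
case: (boolP [exists z, (z \in S :&: iline j u) && P z]).
  case/existsP => z /andP [zin Pz].
  have e : [set x in S | P x] :&: iline j u = S :&: iline j u.
    apply/setP => w; rewrite !in_setI memSP; case: (boolP (w \in S)) => //= wS.
    case: (boolP (w \in iline j u)) => wl; rewrite ?andbT ?andbF //.
    by rewrite -(h j u z w zin) // in_setI wS wl.
  rewrite e; exact: hS (isl _ _).
move=> nex; left; apply/eqP; rewrite cards_eq0; apply/eqP/setP => w.
rewrite in_set0 in_setI memSP.
apply/negP => /andP [/andP [wS Pw] wl]; case/negP: nex; apply/existsP; exists w.
by rewrite in_setI wS wl Pw.
Qed.

Lemma main_contra y : y \in bslash i S :&: bslash i' S -> bslash i S != bslash i' S ->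
  exists P : {set {set word n}},
        [/\ partition P S, 2 <= #|P| & forall B, B \in P -> double_code B].
Proof.
move=> yT neq.
set SF := [set x in S | hasT x]; set SK := [set x in S | ~~ hasT x].
have [xF xFin] : exists x, x \in SF.
  move: yT; rewrite /bslash !inE => /andP [/andP [yS1 yE1] /andP [_ yE2]].
  case/bigcupP: yE1 => x xS yl; exists x; rewrite inE xS /=.
  have ey : upd x (y i) (y i') = y.
    have e' : y i' = x i' by move/ilineP: (yl); apply; rewrite eq_sym.
    rewrite e'; exact: esym (iline_i yl).
  apply/existsP; exists (y i); apply/existsP; exists (y i'); rewrite ey.
  rewrite /bslash !inE yS1 yE2 /=. rewrite andbT; apply/bigcupP; by exists x.
have [xK xKin] : exists x, x \in SK.
  have : ~~ [forall y, (y \in bslash i S) == (y \in bslash i' S)].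
    apply: contra neq => /forallP h; apply/eqP/setP => y'; apply/eqP; exact: h.
  rewrite negb_forall => /existsP [y' hy'].
  move: hy'; rewrite /bslash !inE.
  case: (boolP (y' \in S)) => //= y'S.
  case: (boolP (y' \in Ecal i S)) => /= yE1 yE2.
    case/bigcupP: yE1 => x xS yl; exists x; rewrite inE xS /=.
    apply/negP => hx; have [fr _] := full hx.
    case/existsP: (fr (y' i)) => c hc.
    rewrite (iline_i yl) memE_i' in yE2; move/negP: yE2; apply; by apply/existsP; exists c.
  case/bigcupP: (negPn yE2) => x xS yl; exists x; rewrite inE xS /=.
  apply/negP => hx; have [_ fc] := full hx.
  case/existsP: (fc (y' i')) => r hr.
  rewrite (iline_i' yl) memE_i in yE1; move/negP: yE1; apply; by apply/existsP; exists r.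
have neFK : SF != SK.
  apply/negP => /eqP e; have := xFin; rewrite e !inE => /andP [_ h].
  have := xFin; rewrite inE => /andP [_]; by rewrite (negbTE h).
exists [set SF; SK]; split.
- rewrite /partition; apply/and3P; split.
  + apply/eqP/setP => x; apply/bigcupP/idP.
      by case=> B /set2P [->|->]; rewrite inE => /andP [].
    move=> xS; case: (boolP (hasT x)) => hx.
      by exists SF; rewrite ?inE ?eqxx ?xS.
    by exists SK; rewrite ?inE ?eqxx ?xS ?orbT.
  + apply/trivIsetP => A B /set2P [->|->] /set2P [->|->]; rewrite ?eqxx // => _;
      rewrite -setI_eq0; apply/eqP/setP => x; rewrite !inE;
      by case: (hasT x); rewrite /= ?andbF.
  + rewrite !inE negb_or; apply/andP; split; apply/eqP => e.
      by move: xFin; rewrite -e inE.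
    by move: xKin; rewrite -e inE.
- by rewrite cards2 neFK.
- move=> B /set2P [->|->]; apply: dc_sub => j u z w hz hw.
    exact: (const hz hw).
  by rewrite (const hz hw).
Qed.

End W.

Theorem proposition6 (n : nat) (S : {set word n}) (i i' : 'I_n) :
  prime_double_code S ->
  bslash i S = bslash i' S \/ bslash i S :&: bslash i' S = set0.
Proof.
move=> [[hS [M [hM hSM]]] [_ nopart]].
case: (eqVneq i i') => [<-|ne]; first by left.
case: (eqVneq (bslash i S) (bslash i' S)) => [e|neq]; first by left.
right; case: (set_0Vmem (bslash i S :&: bslash i' S)) => [//|[y yT]].
exfalso; apply: nopart; exact: (main_contra ne hS hM hSM yT neq).
Qed.
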